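(* Let $M\subset\mathbb{R}^2$ be open with coordinates $(x,u)$, let $M^{(1)}$ be the first-order jet space with coordinates $(x,u,u_x)$, and consider the ODE $u_{xx}=\phi(x,u,u_x)$ with associated vector field $\mathbf{A}=\partial_x+u_x\partial_u+\phi\,\partial_{u_x}$. Let $(\partial_u,\lambda_1)$ and $(\partial_u,\lambda_2)$ be the canonical representatives of two non-equivalent generalized $\mathcal{C}^\infty$-symmetries of this ODE, and let $\mathcal{A}_1,\mathcal{A}_2$ be their respective $\mathbf{A}$-equivalence classes. Denote $\mathbf{X}_i=(\partial_u)^{[\lambda_i,(1)]}=\partial_u+\lambda_i\partial_{u_x}$ ($i=1,2$), let $\rho=\dfrac{\mathbf{X}_1(\lambda_2)-\mathbf{X}_2(\lambda_1)}{\lambda_1-\lambda_2}$, and let $f_1,f_2$ be two functions on $M^{(1)}$ satisfying $\dfrac{\mathbf{X}_1(f_2)}{f_2}=\dfrac{\mathbf{X}_2(f_1)}{f_1}=\rho$. Set $\rho_i=\lambda_i-\mathbf{A}(f_i)/f_i$ ($i=1,2$). Then: (1) $(f_1\partial_u,\rho_1)\in\mathcal{A}_1$ and $(f_2\partial_u,\rho_2)\in\mathcal{A}_2$; (2) denoting $\mathbf{Y}_1=(f_1\partial_u)^{[\rho_1,(1)]}$ and $\mathbf{Y}_2=(f_2\partial_u)^{[\rho_2,(1)]}$, one has $[\mathbf{Y}_1,\mathbf{A}]=\rho_1\mathbf{Y}_1$, $[\mathbf{Y}_2,\mathbf{A}]=\rho_2\mathbf{Y}_2$ and $[\mathbf{Y}_1,\mathbf{Y}_2]=0$;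 in particular $\mathbf{Y}_1,\mathbf{Y}_2$ commute.
   Context: All functions are smooth on $M^{(1)}$ and all statements are local, on an open set where the functions appearing in denominators ($\lambda_1-\lambda_2$, $f_1$, $f_2$) do not vanish. For smooth $\xi,\eta,\lambda$ on $M^{(1)}$ and $\mathbf{v}=\xi\partial_x+\eta\partial_u$, the $\lambda$-prolongation is $\mathbf{v}^{[\lambda,(1)]}=\mathbf{v}+\big((\mathbf{A}+\lambda)(\eta)-(\mathbf{A}+\lambda)(\xi)u_x\big)\partial_{u_x}$. The pair $(\mathbf{v},\lambda)$ is a generalized $\mathcal{C}^\infty$-symmetry of the ODE if $[\mathbf{v}^{[\lambda,(1)]},\mathbf{A}]=\lambda\,\mathbf{v}^{[\lambda,(1)]}+\mu\mathbf{A}$ with $\mu=-(\mathbf{A}+\lambda)(\xi)$. Two generalized $\mathcal{C}^\infty$-symmetries $(\mathbf{v}_1,\lambda_1)$, $(\mathbf{v}_2,\lambda_2)$ are $\mathbf{A}$-equivalent if $\{\mathbf{A},\mathbf{v}_1^{[\lambda_1,(1)]},\mathbf{v}_2^{[\lambda_2,(1)]}\}$ is linearly dependent over $C^\infty(M^{(1)})$; this is an equivalence relation whose classes are the $\mathbf{A}$-equivalence classes. If $Q=\eta-\xi u_x$ is the characteristic of $\mathbf{v}$, the canonical representative of the class of $(\mathbf{v},\lambda)$ is $(\partial_u,\lambda+\mathbf{A}(Q)/Q)$. *)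

(* Defs.v *)
From Stdlib Require Import Reals.
From Coquelicot Require Import Coquelicot.
Open Scope R_scope.

(* Functions on (an open subset of) the jet space M^(1), coordinates (x,u,p),
   p standing for u_x. *)
Definition fn3 := R -> R -> R -> R.

Definition open3 (U : R -> R -> R -> Prop) : Prop :=
  forall x u p, U x u p -> exists eps, 0 < eps /\
    forall x' u' p', Rabs (x' - x) < eps -> Rabs (u' - u) < eps ->
      Rabs (p' - p) < eps -> U x' u' p'.

Definition dx (f : fn3) : fn3 := fun x u p => Derive (fun t => f t u p) x.
Definition du (f : fn3) : fn3 := fun x u p => Derive (fun t => f x t p) u.
Definition dp (f : fn3) : fn3 := fun x u p => Derive (fun t => f x u t) p.

Definition cont_at3 (f : fn3) x u p : Prop :=
  forall eps, 0 < eps -> exists delta, 0 < delta /\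
    forall x' u' p', Rabs (x' - x) < delta -> Rabs (u' - u) < delta ->
      Rabs (p' - p) < delta -> Rabs (f x' u' p' - f x u p) < eps.

Fixpoint Cn (U : R -> R -> R -> Prop) (n : nat) (f : fn3) : Prop :=
  match n with
  | O => forall x u p, U x u p -> cont_at3 f x u p
  | S m =>
      (forall x u p, U x u p ->
         ex_derive (fun t => f t u p) x /\ ex_derive (fun t => f x t p) u /\
         ex_derive (fun t => f x u t) p)
      /\ Cn U m f /\ Cn U m (dx f) /\ Cn U m (du f) /\ Cn U m (dp f)
  end.

Definition smooth_on U (f : fn3) : Prop := forall n, Cn U n f.

Record vf := VF { vx : fn3; vu : fn3; vp : fn3 }.

Definition act (V : vf) (f : fn3) : fn3 := fun x u p =>
  vx V x u p * dx f x u p + vu V x u p * du f x u p + vp V x u p * dp f x u p.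

Definition bracket (V W : vf) : vf :=
  VF (fun x u p => act V (vx W) x u p - act W (vx V) x u p)
     (fun x u p => act V (vu W) x u p - act W (vu V) x u p)
     (fun x u p => act V (vp W) x u p - act W (vp V) x u p).

Definition vf_add (V W : vf) : vf :=
  VF (fun x u p => vx V x u p + vx W x u p)
     (fun x u p => vu V x u p + vu W x u p)
     (fun x u p => vp V x u p + vp W x u p).

Definition vf_scale (g : fn3) (V : vf) : vf :=
  VF (fun x u p => g x u p * vx V x u p)
     (fun x u p => g x u p * vu V x u p)
     (fun x u p => g x u p * vp V x u p).

Definition vf_zero : vf := VF (fun _ _ _ => 0) (fun _ _ _ => 0) (fun _ _ _ => 0).

Definition vf_eq_on (U : R -> R -> R -> Prop) (V W : vf) : Prop :=
  forall x u p, U x u p ->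
    vx V x u p = vx W x u p /\ vu V x u p = vu W x u p /\ vp V x u p = vp W x u p.

Definition Afield (phi : fn3) : vf := VF (fun _ _ _ => 1) (fun _ _ p => p) phi.

Definition prol (phi xi eta lam : fn3) : vf :=
  VF xi eta (fun x u p =>
    (act (Afield phi) eta x u p + lam x u p * eta x u p)
    - (act (Afield phi) xi x u p + lam x u p * xi x u p) * p).

Definition gen_sym U (phi xi eta lam : fn3) : Prop :=
  smooth_on U xi /\ smooth_on U eta /\ smooth_on U lam /\
  let Y := prol phi xi eta lam in
  let mu : fn3 := fun x u p =>
    - (act (Afield phi) xi x u p + lam x u p * xi x u p) in
  vf_eq_on U (bracket Y (Afield phi))
             (vf_add (vf_scale lam Y) (vf_scale mu (Afield phi))).

(* {V1,V2,V3} linearly dependent over C^infinity(U): a nontrivial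
   (not identically zero on U) combination with smooth coefficients vanishes *)
Definition lin_dep3 U (V1 V2 V3 : vf) : Prop :=
  exists a b c : fn3, smooth_on U a /\ smooth_on U b /\ smooth_on U c /\
    (exists x u p, U x u p /\ (a x u p <> 0 \/ b x u p <> 0 \/ c x u p <> 0)) /\
    vf_eq_on U (vf_add (vf_scale a V1) (vf_add (vf_scale b V2) (vf_scale c V3)))
               vf_zero.

Definition A_equiv U (phi xi1 eta1 lam1 xi2 eta2 lam2 : fn3) : Prop :=
  lin_dep3 U (Afield phi) (prol phi xi1 eta1 lam1) (prol phi xi2 eta2 lam2).

Definition zero3 : fn3 := fun _ _ _ => 0.
Definition one3 : fn3 := fun _ _ _ => 1.

(* Main.v *)
Require Import Defs.
From Stdlib Require Import Reals Lra Psatz FunctionalExtensionality.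
From Coquelicot Require Import Coquelicot.
Open Scope R_scope.

Lemma cont_const c x u p : cont_at3 (fun _ _ _ => c) x u p.
Proof. intros e he; exists 1; split; [lra|]; intros; rewrite Rminus_eq_0, Rabs_R0; lra. Qed.

Lemma cont_pfn x u p : cont_at3 (fun _ _ p => p) x u p.
Proof. intros e he; exists e; split; [lra|]; intros; assumption. Qed.

Lemma cont_plus f g x u p : cont_at3 f x u p -> cont_at3 g x u p ->
  cont_at3 (fun x u p => f x u p + g x u p) x u p.
Proof.
intros hf hg e he.
destruct (hf (e/2) ltac:(lra)) as [d1 [hd1 H1]].
destruct (hg (e/2) ltac:(lra)) as [d2 [hd2 H2]].
exists (Rmin d1 d2); split; [apply Rmin_pos; lra|].
intros x' u' p' a b c.
assert (A1 := Rmin_l d1 d2); assert (A2 := Rmin_r d1 d2).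
specialize (H1 x' u' p' ltac:(lra) ltac:(lra) ltac:(lra)).
specialize (H2 x' u' p' ltac:(lra) ltac:(lra) ltac:(lra)).
replace (f x' u' p' + g x' u' p' - (f x u p + g x u p)) with
  ((f x' u' p' - f x u p) + (g x' u' p' - g x u p)) by ring.
eapply Rle_lt_trans; [apply Rabs_triang|]. lra.
Qed.

Lemma cont_mult f g x u p : cont_at3 f x u p -> cont_at3 g x u p ->
  cont_at3 (fun x u p => f x u p * g x u p) x u p.
Proof.
intros hf hg e he.
set (a := f x u p). set (b := g x u p).
set (K := 1 + Rabs a + Rabs b).
assert (hK : 0 < K) by (unfold K; pose proof (Rabs_pos a); pose proof (Rabs_pos b); lra).
set (e' := Rmin 1 (e / K)).
assert (he' : 0 < e') by (apply Rmin_pos; [lra| apply Rdiv_lt_0_compat; lra]).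
assert (e'1 : e' <= 1) by apply Rmin_l.
assert (e'K : e' * K <= e).
{ assert (e' <= e / K) by apply Rmin_r.
  apply Rmult_le_compat_r with (r := K) in H; [|lra].
  replace (e / K * K) with e in H by (field; lra). exact H. }
destruct (hf e' he') as [d1 [hd1 H1]].
destruct (hg e' he') as [d2 [hd2 H2]].
exists (Rmin d1 d2); split; [apply Rmin_pos; lra|].
intros x' u' p' h1 h2 h3.
assert (A1 := Rmin_l d1 d2); assert (A2 := Rmin_r d1 d2).
specialize (H1 x' u' p' ltac:(lra) ltac:(lra) ltac:(lra)).
specialize (H2 x' u' p' ltac:(lra) ltac:(lra) ltac:(lra)).
fold a in H1. fold b in H2.
set (s := f x' u' p' - a) in *. set (t := g x' u' p' - b) in *.
replace (f x' u' p' * g x' u' p' - a * b) with (s * t + s * b + a * t)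
  by (unfold s, t; ring).
eapply Rle_lt_trans; [apply Rabs_triang|].
eapply Rle_lt_trans; [apply Rplus_le_compat_r; apply Rabs_triang|].
rewrite !Rabs_mult.
pose proof (Rabs_pos s). pose proof (Rabs_pos t).
pose proof (Rabs_pos a). pose proof (Rabs_pos b).
unfold K in e'K.
nra.
Qed.

Lemma cont_inv f x u p : f x u p <> 0 -> cont_at3 f x u p ->
  cont_at3 (fun x u p => / f x u p) x u p.
Proof.
intros hnz hf e he.
set (a := f x u p) in *.
assert (ha : 0 < Rabs a) by (apply Rabs_pos_lt; exact hnz).
set (e' := Rmin (Rabs a / 2) (e * (Rabs a * Rabs a) / 2)).
assert (he' : 0 < e').
{ apply Rmin_pos; [lra|]. apply Rdiv_lt_0_compat; [|lra]. apply Rmult_lt_0_compat; nra. }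
assert (E1 : e' <= Rabs a / 2) by apply Rmin_l.
assert (E2 : e' <= e * (Rabs a * Rabs a) / 2) by apply Rmin_r.
destruct (hf e' he') as [d [hd H]].
exists d; split; [lra|].
intros x' u' p' h1 h2 h3.
specialize (H x' u' p' h1 h2 h3). fold a in H.
set (b := f x' u' p') in *.
assert (hb : Rabs a / 2 <= Rabs b).
{ pose proof (Rabs_triang_inv a b). rewrite <- Rabs_Ropp in H.
  replace (- (b - a)) with (a - b) in H by ring. lra. }
assert (bnz : b <> 0).
{ intro hb0. rewrite hb0, Rabs_R0 in hb. lra. }
replace (/ b - / a) with ((a - b) * / (b * a)) by (field; split; assumption).
rewrite Rabs_mult, Rabs_inv, Rabs_mult.
assert (hw : 0 < Rabs b * Rabs a) by nra.
set (w := / (Rabs b * Rabs a)).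
assert (hw1 : w * (Rabs b * Rabs a) = 1) by (unfold w; field; lra).
assert (hw0 : 0 < w) by (unfold w; apply Rinv_0_lt_compat; lra).
rewrite <- Rabs_Ropp in H. replace (- (b - a)) with (a - b) in H by ring.
pose proof (Rabs_pos (a - b)).
assert (K1 : Rabs (a - b) < e * (Rabs b * Rabs a)).
{ assert (e * (Rabs a * Rabs a) / 2 <= e * (Rabs b * Rabs a)) by nra. lra. }
assert (K2 : Rabs (a - b) * w < e * (Rabs b * Rabs a) * w) by (apply Rmult_lt_compat_r; lra).
replace (e * (Rabs b * Rabs a) * w) with e in K2 by (rewrite Rmult_assoc, (Rmult_comm _ w), hw1; ring).
exact K2.
Qed.

Section S.
Variable U : R -> R -> R -> Prop.
Hypothesis hU : open3 U.

Lemma loc_x x u p : U x u p -> locally x (fun t => U t u p).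
Proof.
intros h. destruct (hU _ _ _ h) as [e [he H]].
exists (mkposreal e he). intros y hy. apply H.
- exact hy.
- rewrite Rminus_eq_0, Rabs_R0; exact he.
- rewrite Rminus_eq_0, Rabs_R0; exact he.
Qed.
Lemma loc_u x u p : U x u p -> locally u (fun t => U x t p).
Proof.
intros h. destruct (hU _ _ _ h) as [e [he H]].
exists (mkposreal e he). intros y hy. apply H.
- rewrite Rminus_eq_0, Rabs_R0; exact he.
- exact hy.
- rewrite Rminus_eq_0, Rabs_R0; exact he.
Qed.
Lemma loc_p x u p : U x u p -> locally p (fun t => U x u t).
Proof.
intros h. destruct (hU _ _ _ h) as [e [he H]].
exists (mkposreal e he). intros y hy. apply H.
- rewrite Rminus_eq_0, Rabs_R0; exact he.
- rewrite Rminus_eq_0, Rabs_R0; exact he.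
- exact hy.
Qed.

Lemma d_ext f g x u p : (forall x u p, U x u p -> f x u p = g x u p) -> U x u p ->
  dx f x u p = dx g x u p /\ du f x u p = du g x u p /\ dp f x u p = dp g x u p.
Proof.
intros E h. unfold dx, du, dp. split; [|split]; apply Derive_ext_loc.
- eapply filter_imp; [|apply (loc_x _ _ _ h)]. intros; apply E; auto.
- eapply filter_imp; [|apply (loc_u _ _ _ h)]. intros; apply E; auto.
- eapply filter_imp; [|apply (loc_p _ _ _ h)]. intros; apply E; auto.
Qed.

Lemma act_ext V f g x u p : (forall x u p, U x u p -> f x u p = g x u p) -> U x u p ->
  act V f x u p = act V g x u p.
Proof.
intros E h. destruct (d_ext f g x u p E h) as [a [b c]]. unfold act. rewrite a, b, c. reflexivity.
Qed.

Lemma Cn_ext n : forall f g, (forall x u p, U x u p -> f x u p = g x u p) -> Cn U n f -> Cn U n g.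
Proof.
induction n as [|m IH]; intros f g E Hf.
- simpl in *. intros x u p h e he.
  destruct (Hf x u p h e he) as [d [hd H]].
  destruct (hU _ _ _ h) as [r [hr Hr]].
  exists (Rmin d r); split; [apply Rmin_pos; lra|].
  intros x' u' p' a b c.
  assert (A1 := Rmin_l d r); assert (A2 := Rmin_r d r).
  rewrite <- (E x u p h), <- (E x' u' p' (Hr x' u' p' ltac:(lra) ltac:(lra) ltac:(lra))).
  apply H; lra.
- destruct Hf as [ex [H0 [Hx [Hu Hp]]]].
  split; [|split; [|split; [|split]]].
  + intros x u p h. destruct (ex x u p h) as [a [b c]]. split; [|split].
    * eapply ex_derive_ext_loc; [|exact a].
      eapply filter_imp; [|apply (loc_x _ _ _ h)]. intros; apply E; auto.
    * eapply ex_derive_ext_loc; [|exact b].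
      eapply filter_imp; [|apply (loc_u _ _ _ h)]. intros; apply E; auto.
    * eapply ex_derive_ext_loc; [|exact c].
      eapply filter_imp; [|apply (loc_p _ _ _ h)]. intros; apply E; auto.
  + exact (IH f g E H0).
  + apply (IH (dx f)); [|exact Hx]. intros; apply (d_ext f g); auto.
  + apply (IH (du f)); [|exact Hu]. intros; apply (d_ext f g); auto.
  + apply (IH (dp f)); [|exact Hp]. intros; apply (d_ext f g); auto.
Qed.

Lemma Cn_const n : forall c, Cn U n (fun _ _ _ => c).
Proof.
induction n as [|m IH]; intros c.
- intros x u p _; apply cont_const.
- split; [|split; [|split; [|split]]].
  + intros; split; [|split]; apply ex_derive_const.
  + apply IH.
  + apply (Cn_ext _ (fun _ _ _ => 0)); [|apply IH]. intros; unfold dx; rewrite Derive_const; auto.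
  + apply (Cn_ext _ (fun _ _ _ => 0)); [|apply IH]. intros; unfold du; rewrite Derive_const; auto.
  + apply (Cn_ext _ (fun _ _ _ => 0)); [|apply IH]. intros; unfold dp; rewrite Derive_const; auto.
Qed.

Lemma Cn_pfn n : Cn U n (fun _ _ p => p).
Proof.
induction n as [|m IH].
- intros x u p _; apply cont_pfn.
- split; [|split; [|split; [|split]]].
  + intros; split; [|split]; [apply ex_derive_const|apply ex_derive_const|apply ex_derive_id].
  + apply IH.
  + apply (Cn_ext _ (fun _ _ _ => 0)); [|apply Cn_const]. intros; unfold dx; rewrite Derive_const; auto.
  + apply (Cn_ext _ (fun _ _ _ => 0)); [|apply Cn_const]. intros; unfold du; rewrite Derive_const; auto.
  + apply (Cn_ext _ (fun _ _ _ => 1)); [|apply Cn_const]. intros; unfold dp; symmetry; apply Derive_id.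
Qed.

Lemma Cn_plus n : forall f g, Cn U n f -> Cn U n g -> Cn U n (fun x u p => f x u p + g x u p).
Proof.
induction n as [|m IH]; intros f g Hf Hg.
- intros x u p h; apply cont_plus; [apply Hf|apply Hg]; auto.
- destruct Hf as [exf [F0 [Fx [Fu Fp]]]]. destruct Hg as [exg [G0 [Gx [Gu Gp]]]].
  split; [|split; [|split; [|split]]].
  + intros x u p h. destruct (exf x u p h) as [a [b c]]. destruct (exg x u p h) as [a' [b' c']].
    split; [|split].
    * exact (ex_derive_plus (fun t => f t u p) (fun t => g t u p) x a a').
    * exact (ex_derive_plus (fun t => f x t p) (fun t => g x t p) u b b').
    * exact (ex_derive_plus (fun t => f x u t) (fun t => g x u t) p c c').
  + apply IH; auto.
  + apply (Cn_ext _ (fun x u p => dx f x u p + dx g x u p)); [|apply IH; auto].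
    intros x u p h. destruct (exf x u p h) as [a [b c]]. destruct (exg x u p h) as [a' [b' c']].
    unfold dx. rewrite Derive_plus; auto.
  + apply (Cn_ext _ (fun x u p => du f x u p + du g x u p)); [|apply IH; auto].
    intros x u p h. destruct (exf x u p h) as [a [b c]]. destruct (exg x u p h) as [a' [b' c']].
    unfold du. rewrite Derive_plus; auto.
  + apply (Cn_ext _ (fun x u p => dp f x u p + dp g x u p)); [|apply IH; auto].
    intros x u p h. destruct (exf x u p h) as [a [b c]]. destruct (exg x u p h) as [a' [b' c']].
    unfold dp. rewrite Derive_plus; auto.
Qed.

Lemma Cn_mult n : forall f g, Cn U n f -> Cn U n g -> Cn U n (fun x u p => f x u p * g x u p).
Proof.
induction n as [|m IH]; intros f g Hf Hg.
- intros x u p h; apply cont_mult; [apply Hf|apply Hg]; auto.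
- assert (Hf' := Hf); assert (Hg' := Hg).
  destruct Hf as [exf [F0 [Fx [Fu Fp]]]]. destruct Hg as [exg [G0 [Gx [Gu Gp]]]].
  split; [|split; [|split; [|split]]].
  + intros x u p h. destruct (exf x u p h) as [a [b c]]. destruct (exg x u p h) as [a' [b' c']].
    split; [|split]; apply ex_derive_mult; auto.
  + apply IH; auto.
  + apply (Cn_ext _ (fun x u p => dx f x u p * g x u p + f x u p * dx g x u p));
      [|apply Cn_plus; apply IH; auto].
    intros x u p h. destruct (exf x u p h) as [a [b c]]. destruct (exg x u p h) as [a' [b' c']].
    unfold dx. rewrite Derive_mult; auto.
  + apply (Cn_ext _ (fun x u p => du f x u p * g x u p + f x u p * du g x u p));
      [|apply Cn_plus; apply IH; auto].
    intros x u p h. destruct (exf x u p h) as [a [b c]]. destruct (exg x u p h) as [a' [b' c']].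
    unfold du. rewrite Derive_mult; auto.
  + apply (Cn_ext _ (fun x u p => dp f x u p * g x u p + f x u p * dp g x u p));
      [|apply Cn_plus; apply IH; auto].
    intros x u p h. destruct (exf x u p h) as [a [b c]]. destruct (exg x u p h) as [a' [b' c']].
    unfold dp. rewrite Derive_mult; auto.
Qed.

Lemma Cn_inv n : forall f, (forall x u p, U x u p -> f x u p <> 0) -> Cn U n f ->
  Cn U n (fun x u p => / f x u p).
Proof.
induction n as [|m IH]; intros f nz Hf.
- intros x u p h; apply cont_inv; [apply nz|apply Hf]; auto.
- destruct Hf as [exf [F0 [Fx [Fu Fp]]]].
  assert (I := IH f nz F0).
  split; [|split; [|split; [|split]]].
  + intros x u p h. destruct (exf x u p h) as [a [b c]].
    split; [|split]; apply ex_derive_inv; auto.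
  + exact I.
  + apply (Cn_ext _ (fun x u p => (-1 * dx f x u p) * (/ f x u p * / f x u p)));
      [|apply Cn_mult; [apply Cn_mult; [apply Cn_const|auto]|apply Cn_mult; auto]].
    intros x u p h. destruct (exf x u p h) as [a [b c]].
    unfold dx. rewrite Derive_inv; auto. field. apply nz; auto.
  + apply (Cn_ext _ (fun x u p => (-1 * du f x u p) * (/ f x u p * / f x u p)));
      [|apply Cn_mult; [apply Cn_mult; [apply Cn_const|auto]|apply Cn_mult; auto]].
    intros x u p h. destruct (exf x u p h) as [a [b c]].
    unfold du. rewrite Derive_inv; auto. field. apply nz; auto.
  + apply (Cn_ext _ (fun x u p => (-1 * dp f x u p) * (/ f x u p * / f x u p)));
      [|apply Cn_mult; [apply Cn_mult; [apply Cn_const|auto]|apply Cn_mult; auto]].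
    intros x u p h. destruct (exf x u p h) as [a [b c]].
    unfold dp. rewrite Derive_inv; auto. change (Derive (f x u) p) with (Derive (fun t => f x u t) p). field. apply nz; auto.
Qed.

Lemma sm_ext f g : (forall x u p, U x u p -> f x u p = g x u p) -> smooth_on U f -> smooth_on U g.
Proof. intros E H n. apply (Cn_ext n f g E (H n)). Qed.
Lemma sm_const c : smooth_on U (fun _ _ _ => c).
Proof. intro n; apply Cn_const. Qed.
Lemma sm_pfn : smooth_on U (fun _ _ p => p).
Proof. intro n; apply Cn_pfn. Qed.
Lemma sm_plus f g : smooth_on U f -> smooth_on U g -> smooth_on U (fun x u p => f x u p + g x u p).
Proof. intros a b n; apply Cn_plus; auto. Qed.
Lemma sm_mult f g : smooth_on U f -> smooth_on U g -> smooth_on U (fun x u p => f x u p * g x u p).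
Proof. intros a b n; apply Cn_mult; auto. Qed.
Lemma sm_inv f : (forall x u p, U x u p -> f x u p <> 0) -> smooth_on U f -> smooth_on U (fun x u p => / f x u p).
Proof. intros a b n; apply Cn_inv; auto. Qed.
Lemma sm_dx f : smooth_on U f -> smooth_on U (dx f).
Proof. intros H n. destruct (H (S n)) as [_ [_ [a _]]]. exact a. Qed.
Lemma sm_du f : smooth_on U f -> smooth_on U (du f).
Proof. intros H n. destruct (H (S n)) as [_ [_ [_ [a _]]]]. exact a. Qed.
Lemma sm_dp f : smooth_on U f -> smooth_on U (dp f).
Proof. intros H n. destruct (H (S n)) as [_ [_ [_ [_ a]]]]. exact a. Qed.
Lemma sm_ex f x u p : smooth_on U f -> U x u p ->
  ex_derive (fun t => f t u p) x /\ ex_derive (fun t => f x t p) u /\ ex_derive (fun t => f x u t) p.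
Proof. intros H h. destruct (H 1%nat) as [a _]. apply a; auto. Qed.

Lemma act_mult V f g x u p : smooth_on U f -> smooth_on U g -> U x u p ->
  act V (fun x u p => f x u p * g x u p) x u p = act V f x u p * g x u p + f x u p * act V g x u p.
Proof.
intros hf hg h. destruct (sm_ex f x u p hf h) as [a [b c]]. destruct (sm_ex g x u p hg h) as [a' [b' c']].
unfold act, dx, du, dp.
rewrite (Derive_mult (fun t => f t u p) (fun t => g t u p) x a a').
rewrite (Derive_mult (fun t => f x t p) (fun t => g x t p) u b b').
rewrite (Derive_mult (fun t => f x u t) (fun t => g x u t) p c c'). ring.
Qed.
End S.

Lemma L_prolX phi lam : prol phi zero3 one3 lam = VF zero3 one3 lam.
Proof.
unfold prol. f_equal.
apply functional_extensionality; intro x; apply functional_extensionality; intro u;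
apply functional_extensionality; intro p.
unfold act, zero3, one3, dx, du, dp. rewrite !Derive_const. ring.
Qed.

Lemma act_zero V x u p : act V zero3 x u p = 0.
Proof. unfold act, zero3, dx, du, dp; rewrite !Derive_const; ring. Qed.
Lemma act_const V c x u p : act V (fun _ _ _ => c) x u p = 0.
Proof. unfold act, dx, du, dp; rewrite !Derive_const; ring. Qed.
Lemma act_pfn V x u p : act V (fun _ _ p => p) x u p = vp V x u p.
Proof. unfold act, dx, du, dp; rewrite !Derive_const.
change (Derive (fun t => t) p) with (Derive id p). rewrite Derive_id. ring. Qed.
Lemma act_X lam g x u p : act (VF zero3 one3 lam) g x u p = du g x u p + lam x u p * dp g x u p.
Proof. unfold act; simpl; unfold zero3, one3; ring. Qed.
Lemma vpY phi f rho x u p :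
  vp (prol phi zero3 f rho) x u p = act (Afield phi) f x u p + rho x u p * f x u p.
Proof. unfold prol; cbn [vp]. rewrite act_zero. unfold zero3. ring. Qed.
Lemma act_Y phi f rho g x u p :
  act (prol phi zero3 f rho) g x u p = f x u p * du g x u p + vp (prol phi zero3 f rho) x u p * dp g x u p.
Proof. unfold act at 1. unfold prol at 1 2. cbn [vx vu]. unfold zero3. ring. Qed.
Lemma Yvp_eq phi lam f x u p : f x u p <> 0 ->
  vp (prol phi zero3 f (fun x u p => lam x u p - act (Afield phi) f x u p / f x u p)) x u p
  = lam x u p * f x u p.
Proof. intro h. rewrite vpY. field. exact h. Qed.

Lemma sym_rel U phi lam x u p : gen_sym U phi zero3 one3 lam -> U x u p ->
  act (Afield phi) lam x u p = du phi x u p + lam x u p * dp phi x u p - lam x u p * lam x u p.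
Proof.
intros [_ [_ [_ H]]] h. cbv zeta in H. rewrite L_prolX in H.
destruct (H x u p h) as [_ [_ H3]]. unfold bracket, vf_add, vf_scale in H3. cbn [vx vu vp] in H3.
rewrite act_X, act_zero in H3. unfold zero3 in H3. change (vp (Afield phi)) with phi in H3.
lra.
Qed.

Lemma part_i U phi lam f (hU : open3 U) (hne : exists x u p, U x u p)
  (hphi : smooth_on U phi) (hsym : gen_sym U phi zero3 one3 lam)
  (hfs : smooth_on U f) (hf : forall x u p, U x u p -> f x u p <> 0) :
  let rho : fn3 := fun x u p => lam x u p - act (Afield phi) f x u p / f x u p in
  let Y := prol phi zero3 f rho in
  (gen_sym U phi zero3 f rho /\ A_equiv U phi zero3 f rho zero3 one3 lam) /\
  vf_eq_on U (bracket Y (Afield phi)) (vf_scale rho Y).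
Proof.
intros rho Y.
assert (hlam : smooth_on U lam) by (destruct hsym as [_ [_ [a _]]]; exact a).
assert (E : forall x u p, U x u p -> vp Y x u p = lam x u p * f x u p).
{ intros x u p h. apply Yvp_eq. auto. }
assert (B : vf_eq_on U (bracket Y (Afield phi)) (vf_scale rho Y)).
{ intros x u p h. unfold bracket, vf_scale. cbn [vx vu vp].
  change (vx (Afield phi)) with (fun _ _ _ : R => 1).
  change (vu (Afield phi)) with (fun _ _ p : R => p).
  change (vp (Afield phi)) with phi.
  change (vx Y) with zero3. change (vu Y) with f.
  rewrite act_const, act_zero, act_pfn. unfold zero3.
  split; [ring|split].
  - unfold Y. rewrite vpY. fold Y. ring.
  - rewrite (act_ext U hU (Afield phi) (vp Y) (fun x u p => lam x u p * f x u p)); auto.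
    rewrite (act_mult U); auto. unfold Y at 1. rewrite act_Y. fold Y.
    rewrite E; auto. rewrite (sym_rel U phi lam x u p hsym h).
    unfold rho. field. auto. }
split; [split|exact B].
- split; [exact (sm_const U hU 0)|split; [exact hfs|split]].
  + unfold rho. eapply (sm_ext U hU); auto.
    2:{ apply (sm_plus U hU); [exact hlam|]. apply (sm_mult U hU); [apply (sm_const U hU (-1))|].
        apply (sm_mult U hU); [|apply (sm_inv U hU); auto].
        apply (sm_plus U hU); [apply (sm_plus U hU)|].
        - apply (sm_mult U hU); [apply (sm_const U hU 1)|apply sm_dx; exact hfs].
        - apply (sm_mult U hU); [exact (sm_pfn U hU)|apply sm_du; exact hfs].
        - apply (sm_mult U hU); [exact hphi|apply sm_dp; exact hfs]. }
    intros x u p h. unfold act. simpl. unfold Rdiv. ring.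
  + cbv zeta. fold Y. intros x u p h. destruct (B x u p h) as [b1 [b2 b3]].
    unfold vf_add, vf_scale. cbn [vx vu vp]. rewrite b1, b2, b3. simpl.
    rewrite !act_zero. unfold zero3. split; [ring|split; ring].
- unfold A_equiv, lin_dep3. rewrite L_prolX.
  exists zero3, one3, (fun x u p => -1 * f x u p).
  split; [exact (sm_const U hU 0)|split; [exact (sm_const U hU 1)|split; [apply (sm_mult U hU); auto; exact (sm_const U hU (-1))|split]]].
  + destruct hne as [x [u [p h]]]. exists x, u, p. split; auto. right; left. unfold one3; lra.
  + fold Y. intros x u p h. unfold vf_add, vf_scale, vf_zero. cbn [vx vu vp].
    change (vx Y) with zero3. change (vu Y) with f. rewrite E; auto.
    unfold zero3, one3. split; [ring|split; ring].
Qed.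

Lemma key f1 f2 l1 l2 u1 p1 u2 p2 ul1 pl1 ul2 pl2 :
  l1 - l2 <> 0 -> f1 <> 0 -> f2 <> 0 ->
  (u2 + l1 * p2) / f2 = ((ul2 + l1 * pl2) - (ul1 + l2 * pl1)) / (l1 - l2) ->
  (u1 + l2 * p1) / f1 = ((ul2 + l1 * pl2) - (ul1 + l2 * pl1)) / (l1 - l2) ->
  (forall G, G = f1 * u2 + l1 * f1 * p2 - (f2 * u1 + l2 * f2 * p1) -> G = 0) /\
  (forall G, G = (f1 * ul2 + l1 * f1 * pl2) * f2 + l2 * (f1 * u2 + l1 * f1 * p2)
      - ((f2 * ul1 + l2 * f2 * pl1) * f1 + l1 * (f2 * u1 + l2 * f2 * p1)) -> G = 0).
Proof.
intros hl h1 h2 H2 H1.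
set (R := ((ul2 + l1 * pl2) - (ul1 + l2 * pl1)) / (l1 - l2)) in *.
assert (K3 : ul2 = R * (l1 - l2) - l1 * pl2 + (ul1 + l2 * pl1)) by (unfold R; field; exact hl).
clearbody R.
assert (K2 : u2 = R * f2 - l1 * p2).
{ rewrite <- H2. field. exact h2. }
assert (K1 : u1 = R * f1 - l2 * p1).
{ rewrite <- H1. field. exact h1. }
subst u1 u2 ul2. split; intros G ->; ring.
Qed.

Lemma comm U phi l1 l2 f1 f2 r1 r2 (hU : open3 U)
  (s1 : smooth_on U l1) (s2 : smooth_on U l2) (t1 : smooth_on U f1) (t2 : smooth_on U f2)
  (hl : forall x u p, U x u p -> l1 x u p - l2 x u p <> 0)
  (h1 : forall x u p, U x u p -> f1 x u p <> 0)
  (h2 : forall x u p, U x u p -> f2 x u p <> 0)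
  (E1 : forall x u p, U x u p -> vp (prol phi zero3 f1 r1) x u p = l1 x u p * f1 x u p)
  (E2 : forall x u p, U x u p -> vp (prol phi zero3 f2 r2) x u p = l2 x u p * f2 x u p)
  (H : forall x u p, U x u p ->
     (du f2 x u p + l1 x u p * dp f2 x u p) / f2 x u p =
       ((du l2 x u p + l1 x u p * dp l2 x u p) - (du l1 x u p + l2 x u p * dp l1 x u p))
       / (l1 x u p - l2 x u p) /\
     (du f1 x u p + l2 x u p * dp f1 x u p) / f1 x u p =
       ((du l2 x u p + l1 x u p * dp l2 x u p) - (du l1 x u p + l2 x u p * dp l1 x u p))
       / (l1 x u p - l2 x u p)) :
  vf_eq_on U (bracket (prol phi zero3 f1 r1) (prol phi zero3 f2 r2)) vf_zero.
Proof.
intros x u p h. unfold bracket, vf_zero. cbn [vx vu vp].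
change (vx (prol phi zero3 f1 r1)) with zero3. change (vx (prol phi zero3 f2 r2)) with zero3.
change (vu (prol phi zero3 f1 r1)) with f1. change (vu (prol phi zero3 f2 r2)) with f2.
rewrite !act_zero.
rewrite (act_ext U hU _ (vp (prol phi zero3 f2 r2)) (fun x u p => l2 x u p * f2 x u p)); auto.
rewrite (act_ext U hU _ (vp (prol phi zero3 f1 r1)) (fun x u p => l1 x u p * f1 x u p)); auto.
rewrite !(act_mult U); auto.
rewrite !act_Y. rewrite !E1, !E2; auto.
destruct (H x u p h) as [Ha Hb].
destruct (key _ _ _ _ _ _ _ _ _ _ _ _ (hl x u p h) (h1 x u p h) (h2 x u p h) Ha Hb) as [K1 K2].
split; [ring|split].
- apply K1. ring.
- apply K2. ring.
Qed.
Theorem theorem1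
  (U : R -> R -> R -> Prop) (phi lam1 lam2 f1 f2 : fn3)
  (hU : open3 U) (hne : exists x u p, U x u p)
  (hphi : smooth_on U phi)
  (hsym1 : gen_sym U phi zero3 one3 lam1)
  (hsym2 : gen_sym U phi zero3 one3 lam2)
  (hnoneq : ~ A_equiv U phi zero3 one3 lam1 zero3 one3 lam2)
  (hlam : forall x u p, U x u p -> lam1 x u p - lam2 x u p <> 0)
  (hf1s : smooth_on U f1) (hf2s : smooth_on U f2)
  (hf1 : forall x u p, U x u p -> f1 x u p <> 0)
  (hf2 : forall x u p, U x u p -> f2 x u p <> 0) :
  let X1 := prol phi zero3 one3 lam1 in
  let X2 := prol phi zero3 one3 lam2 in
  let rho : fn3 := fun x u p =>
    (act X1 lam2 x u p - act X2 lam1 x u p) / (lam1 x u p - lam2 x u p) in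
  (forall x u p, U x u p ->
     act X1 f2 x u p / f2 x u p = rho x u p /\
     act X2 f1 x u p / f1 x u p = rho x u p) ->
  let rho1 : fn3 := fun x u p =>
    lam1 x u p - act (Afield phi) f1 x u p / f1 x u p in
  let rho2 : fn3 := fun x u p =>
    lam2 x u p - act (Afield phi) f2 x u p / f2 x u p in
  let Y1 := prol phi zero3 f1 rho1 in
  let Y2 := prol phi zero3 f2 rho2 in
  (gen_sym U phi zero3 f1 rho1 /\ A_equiv U phi zero3 f1 rho1 zero3 one3 lam1) /\
  (gen_sym U phi zero3 f2 rho2 /\ A_equiv U phi zero3 f2 rho2 zero3 one3 lam2) /\
  vf_eq_on U (bracket Y1 (Afield phi)) (vf_scale rho1 Y1) /\
  vf_eq_on U (bracket Y2 (Afield phi)) (vf_scale rho2 Y2) /\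
  vf_eq_on U (bracket Y1 Y2) vf_zero.
Proof.
cbv zeta. intro Hrho.
rewrite !L_prolX in Hrho.
assert (s1 : smooth_on U lam1) by (destruct hsym1 as [_ [_ [a _]]]; exact a).
assert (s2 : smooth_on U lam2) by (destruct hsym2 as [_ [_ [a _]]]; exact a).
pose proof (part_i U phi lam1 f1 hU hne hphi hsym1 hf1s hf1) as P1.
pose proof (part_i U phi lam2 f2 hU hne hphi hsym2 hf2s hf2) as P2.
cbv zeta in P1, P2.
destruct P1 as [P1a P1b]. destruct P2 as [P2a P2b].
split; [exact P1a|split; [exact P2a|split; [exact P1b|split; [exact P2b|]]]].
apply (comm U phi lam1 lam2 f1 f2); auto.
- intros x u p h. apply Yvp_eq; auto.
- intros x u p h. apply Yvp_eq; auto.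
- intros x u p h. destruct (Hrho x u p h) as [a b]. rewrite !act_X in a, b. split; assumption.
Qed.
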